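(* Let $O_1,O_2$ be Hermitian operators on $\mathcal H$. Then $|\tilde\Xi_{O_1,O_2}\cdot\Xi_{O_1,O_2}|\le\|\tilde\Xi_{O_1,O_2}\|_2^2=\|\Xi_{O_1,O_2}\|_2^2$. If moreover $\rho$ is a density operator and $O$ is traceless Hermitian, then $$|\tilde\Xi_{\rho,O}\cdot\Xi_{\rho,O}|\le\|\tilde\Xi_{\rho,O}\|_2^2=\|\Xi_{\rho,O}\|_2^2\le\|\Xi_O^2\|_{[d]}\le\|\Xi_O\|_2^2=d\|O\|_2^2.$$
   Context: $n\ge1$, $d=2^n$, $\mathcal H=(\mathbb C^2)^{\otimes n}$, $\overline{\mathcal P}_n=\{I,X,Y,Z\}^{\otimes n}$. For operators $A,B$ define functions on $\overline{\mathcal P}_n$ regarded as vectors in $\mathbb R^{d^2}$ (Euclidean norm, standard inner product $\cdot$): $\Xi_A(P)=\operatorname{tr}(AP)$, $\Xi_{A,B}(P)=\operatorname{tr}(AP)\operatorname{tr}(BP)$, $\tilde\Xi_{A,B}(P)=\operatorname{tr}(APBP)$. $\|\Xi_O^2\|_{[d]}$ is the sum of the $d$ largest values of $\Xi_O(P)^2$; $\|O\|_2$ is the Hilbert–Schmidt norm. *)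

(* Defs.v *)
(* Scalars: an arbitrary numClosedFieldType C (e.g. complex R
   for R : realType, or algC); operators on H = (C^2)^{(x) n} are d x d
   matrices, d = 2^n, written in the computational basis. *)
From HB Require Import structures.
From mathcomp Require Import all_boot all_order all_algebra.
Set Implicit Arguments. Unset Strict Implicit. Unset Printing Implicit Defensive.
Import Order.TTheory GRing.Theory Num.Theory.
Local Open Scope ring_scope.

Section Pauli.
Variable C : numClosedFieldType.

Definition adjmx {m} (A : 'M[C]_m) : 'M[C]_m := map_mx Num.conj (A^T).

Definition hermitian_op {m} (A : 'M[C]_m) : Prop := adjmx A = A.

Definition psd {m} (A : 'M[C]_m) : Prop :=
  hermitian_op A /\ forall v : 'cV[C]_m, 0 <= (map_mx Num.conj (v^T) *m A *m v) 0 0.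

Definition density_op {m} (A : 'M[C]_m) : Prop := psd A /\ \tr A = 1.

(* single-qubit Paulis: 0 = I, 1 = X, 2 = Y, 3 = Z; entries indexed by bits *)
Definition pauli1 (a : 'I_4) (r c : bool) : C :=
  match val a with
  | 0 => if r == c then 1 else 0
  | 1 => if r == c then 0 else 1
  | 2 => if r == c then 0 else (if r then 'i else - 'i)
  | _ => if r == c then (if r then -1 else 1) else 0
  end.

Definition qbit (i k : nat) : bool := odd (i %/ 2 ^ k).

Definition pstring (n : nat) := {ffun 'I_n -> 'I_4}.

(* the matrix of the tensor product P_{s_0} (x) ... (x) P_{s_{n-1}} *)
Definition pauli_mx (n : nat) (s : pstring n) : 'M[C]_(2 ^ n) :=
  \matrix_(i, j) \prod_(k < n) pauli1 (s k) (qbit i k) (qbit j k).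

Definition Xi {n} (A : 'M[C]_(2 ^ n)) (s : pstring n) : C :=
  \tr (A *m pauli_mx s).
Definition Xi2 {n} (A B : 'M[C]_(2 ^ n)) (s : pstring n) : C :=
  Xi A s * Xi B s.
Definition Xit {n} (A B : 'M[C]_(2 ^ n)) (s : pstring n) : C :=
  \tr (A *m pauli_mx s *m B *m pauli_mx s).

Definition pdot {n} (f g : pstring n -> C) : C := \sum_s f s * g s.
Definition pnorm2 {n} (f : pstring n -> C) : C := \sum_s `|f s| ^+ 2.

Definition topsum {n} (k : nat) (f : pstring n -> C) : C :=
  \big[Num.max/0]_(S : {set pstring n} | #|S| == k) \sum_(s in S) f s.

Definition hs2 {m} (A : 'M[C]_m) : C := \sum_i \sum_j `|A i j| ^+ 2.

End Pauli.

(* Main.v *)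
Require Import Defs.
From mathcomp Require Import all_boot all_order all_algebra.
From mathcomp Require Import ring.
Import Order.TTheory GRing.Theory Num.Theory.
Local Open Scope ring_scope.

Set Implicit Arguments. Unset Strict Implicit. Unset Printing Implicit Defensive.

Section A.
Variable C : numClosedFieldType.

Definition q1 (k : nat) (r c : bool) : C :=
  match k with
  | 0 => if r == c then 1 else 0
  | 1 => if r == c then 0 else 1
  | 2 => if r == c then 0 else (if r then 1 else -1)
  | _ => if r == c then (if r then -1 else 1) else 0
  end.

Lemma pauli1E (a : 'I_4) r c :
  pauli1 C a r c = (if val a == 2%N then 'i else 1) * q1 (val a) r c.
Proof.
rewrite /pauli1 /q1.
case: a => [[|[|[|[|k]]]] Hk] /=; try rewrite mul1r //.
by case: (r == c); case: r; rewrite ?mulr0 ?mulr1 ?mulrN1.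
Qed.

Lemma i4 : ('i : C) ^+ 4 = 1.
Proof. by rewrite (exprM _ 2 2) sqrCi expr2 mulrNN mulr1. Qed.

Lemma sum4 (F : 'I_4 -> C) :
  \sum_(x < 4) F x = F 0 + F 1 + F 2%:R + F 3%:R.
Proof.
rewrite !big_ord_recl big_ord0 addr0 !addrA.
by do 4? congr (_ + _); congr F; apply: val_inj.
Qed.

Lemma four_z (z a b d e : C) : z * a * (z * b) * (z * d * (z * e)) = z ^+ 4 * (a * b * (d * e)).
Proof. by ring. Qed.

Lemma two_z (z a b : C) : z * a * (z * b) = z ^+ 2 * (a * b).
Proof. by ring. Qed.

Lemma m4_id (b c e a b' c' e' a' : bool) :
  \sum_(x < 4) (pauli1 C x b c * pauli1 C x e a * (pauli1 C x b' c' * pauli1 C x e' a'))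
= \sum_(x < 4) (pauli1 C x b a * pauli1 C x e c * (pauli1 C x b' a' * pauli1 C x e' c')).
Proof.
rewrite !sum4 !pauli1E /= !mul1r !four_z i4 !mul1r.
by case: b; case: c; case: e; case: a; case: b'; case: c'; case: e'; case: a'; rewrite /=; ring.
Qed.

Lemma m2_id (i j k l : bool) :
  \sum_(x < 4) (pauli1 C x i j * pauli1 C x k l) = 2%:R * ((i == l)%:R * (j == k)%:R).
Proof.
rewrite !sum4 !pauli1E /= !mul1r !two_z sqrCi.
by case: i; case: j; case: k; case: l; rewrite /=; ring.
Qed.

Lemma sq_id (x : 'I_4) (i l : bool) :
  pauli1 C x i false * pauli1 C x false l + pauli1 C x i true * pauli1 C x true l = (i == l)%:R.
Proof.
rewrite !pauli1E !two_z; case: x => [[|[|[|[|k]]]] Hk] //=; rewrite ?sqrCi ?expr1n;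
  by case: i; case: l; rewrite /=; ring.
Qed.

Lemma herm1 (x : 'I_4) (r c : bool) : (pauli1 C x c r)^* = pauli1 C x r c.
Proof.
rewrite /pauli1; case: x => [[|[|[|[|k]]]] Hk] /=;
case: r; case: c; rewrite /= ?conjC0 ?conjC1 ?rmorphN /= ?conjC1 ?conjCi ?opprK //.
Qed.
End A.

Section B.
Variable C : numClosedFieldType.

Lemma qbit0 i : qbit i 0 = odd i.
Proof. by rewrite /qbit expn0 divn1. Qed.

Lemma qbitS i k : qbit i k.+1 = qbit i./2 k.
Proof. by rewrite /qbit expnS divnMA divn2. Qed.

Lemma sum_double (G : nat -> C) m :
  \sum_(j < m.*2) G j = \sum_(j < m) (G j.*2 + G j.*2.+1).
Proof.
elim: m => [|m IH]; first by rewrite !big_ord0.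
by rewrite doubleS !big_ord_recr /= IH addrA.
Qed.

Lemma sum_bits n (F : 'I_n -> bool -> C) :
  \sum_(j < 2 ^ n) \prod_(k < n) F k (qbit j k) = \prod_(k < n) (F k false + F k true).
Proof.
elim: n F => [|n IH] F; first by rewrite big_ord1 !big_ord0.
rewrite expnS mul2n (sum_double (fun j => \prod_(k < n.+1) F k (qbit j k))) big_ord_recl.
rewrite -(IH (fun k => F (lift ord0 k))) mulrDl !mulr_sumr -big_split /=.
apply: eq_bigr => j _; rewrite !big_ord_recl !qbit0 /= odd_double /=.
have Hb : forall i : 'I_n, bump 0 i = i.+1 by [].
congr (_ * _ + _ * _); apply: eq_bigr => k _; rewrite Hb qbitS.
  by rewrite doubleK.
by rewrite -[(j.*2.+1)./2]/(uphalf j.*2) uphalf_double.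
Qed.

Lemma bits_inj n i l : (i < 2 ^ n)%N -> (l < 2 ^ n)%N ->
  (forall k, (k < n)%N -> qbit i k = qbit l k) -> i = l.
Proof.
elim: n i l => [|n IH] i l; first by rewrite expn0 !ltnS !leqn0 => /eqP-> /eqP->.
move=> Hi Hl H.
have Ho : odd i = odd l by rewrite -!qbit0; apply: H.
have Hh : i./2 = l./2.
  apply: IH; rewrite ?ltn_half_double -?mul2n -?expnS //.
  by move=> k Hk; rewrite -!qbitS; apply: H.
by rewrite -(odd_double_half i) -(odd_double_half l) Ho Hh.
Qed.

Lemma prod_bits_eq n (i l : 'I_(2 ^ n)) :
  \prod_(k < n) ((qbit i k == qbit l k)%:R : C) = (i == l)%:R.
Proof.
case: (eqVneq i l) => [->|Hne].
  by rewrite big1 // => k _; rewrite eqxx.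
have [k Hk] : exists k : 'I_n, qbit i k != qbit l k.
  apply/existsP; apply: contraT; rewrite negb_exists => /forallP H.
  have Hil : val i = val l.
    apply: (@bits_inj n); try exact: ltn_ord.
    by move=> k Hk; apply/eqP/negPn/(H (Ordinal Hk)).
  by rewrite (val_inj Hil) eqxx in Hne.
by rewrite (bigD1 k) //= (negbTE Hk) mul0r.
Qed.

Lemma sum_pstring n (G : 'I_n -> 'I_4 -> C) :
  \sum_(s : pstring n) \prod_k G k (s k) = \prod_k \sum_a G k a.
Proof. by rewrite bigA_distr_bigA. Qed.

End B.

Section Cp.
Variable C : numClosedFieldType.
Variable n : nat.
Local Notation d := (2 ^ n)%N.
Local Notation P s := (pauli_mx C s).
Local Notation M := 'M[C]_(2 ^ n).
Local Notation I := 'I_(2 ^ n).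

Lemma pauliE (s : pstring n) (i j : I) :
  P s i j = \prod_k pauli1 C (s k) (qbit i k) (qbit j k).
Proof. by rewrite mxE. Qed.

Lemma adj_pauli (s : pstring n) : adjmx (P s) = P s.
Proof.
apply/matrixP => i j; rewrite !mxE rmorph_prod; apply: eq_bigr => k _.
exact: herm1.
Qed.

Lemma pauli_sq (s : pstring n) : P s *m P s = 1%:M.
Proof.
apply/matrixP => i l; rewrite !mxE.
under eq_bigr => j _ do rewrite !pauliE -big_split /=.
rewrite (sum_bits (fun k b => pauli1 C (s k) (qbit i k) b * pauli1 C (s k) b (qbit l k))).
under eq_bigr => k _ do rewrite sq_id.
by rewrite prod_bits_eq.
Qed.

Lemma pauli_m2 (x1 x2 x3 x4 : I) :
  \sum_(s : pstring n) P s x1 x2 * P s x3 x4 = d%:R * ((x1 == x4)%:R * (x2 == x3)%:R).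
Proof.
under eq_bigr => s _ do rewrite !pauliE -big_split /=.
rewrite (sum_pstring (fun k a => pauli1 C a (qbit x1 k) (qbit x2 k) * pauli1 C a (qbit x3 k) (qbit x4 k))).
under eq_bigr => k _ do rewrite m2_id.
rewrite !big_split /= !prod_bits_eq prodr_const card_ord natrX //.
Qed.

Lemma pauli_m4 (b c e a b' c' e' a' : I) :
  \sum_(s : pstring n) P s b c * P s e a * (P s b' c' * P s e' a')
= \sum_(s : pstring n) P s b a * P s e c * (P s b' a' * P s e' c').
Proof.
under eq_bigr => s _ do rewrite !pauliE -!big_split /=.
under [RHS]eq_bigr => s _ do rewrite !pauliE -!big_split /=.
rewrite (sum_pstring (fun k x => pauli1 C x (qbit b k) (qbit c k) * pauli1 C x (qbit e k) (qbit a k) *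
   (pauli1 C x (qbit b' k) (qbit c' k) * pauli1 C x (qbit e' k) (qbit a' k)))).
rewrite (sum_pstring (fun k x => pauli1 C x (qbit b k) (qbit a k) * pauli1 C x (qbit e k) (qbit c k) *
   (pauli1 C x (qbit b' k) (qbit a' k) * pauli1 C x (qbit e' k) (qbit c' k)))).
by apply: eq_bigr => k _; rewrite m4_id.
Qed.

End Cp.

Section Dp.
Variable C : numClosedFieldType.
Variable n : nat.
Local Notation d := (2 ^ n)%N.
Local Notation P s := (pauli_mx C s).
Local Notation M := 'M[C]_(2 ^ n).
Local Notation I := 'I_(2 ^ n).
Local Notation I4 := ((I * I) * (I * I))%type.

Lemma conj_tr m (A : 'M[C]_m) : (\tr A)^* = \tr (adjmx A).
Proof. by rewrite /mxtrace rmorph_sum; apply: eq_bigr => i _; rewrite !mxE. Qed.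

Lemma adjmxM m (A B : 'M[C]_m) : adjmx (A *m B) = adjmx B *m adjmx A.
Proof. by rewrite /adjmx trmx_mul map_mxM. Qed.

Lemma adjmxK m (A : 'M[C]_m) : adjmx (adjmx A) = A.
Proof. by apply/matrixP => i j; rewrite !mxE conjCK. Qed.

Lemma Xi_conj (A : M) s : (Xi A s)^* = Xi (adjmx A) s.
Proof. by rewrite /Xi conj_tr adjmxM adj_pauli mxtrace_mulC. Qed.

Lemma Xit_conj (A B : M) s : (Xit A B s)^* = Xit (adjmx A) (adjmx B) s.
Proof.
by rewrite /Xit conj_tr !adjmxM !adj_pauli !mulmxA mxtrace_mulC !mulmxA.
Qed.

Lemma XiE (A : M) s : Xi A s = \sum_(x : I * I) A x.1 x.2 * P s x.2 x.1.
Proof.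
rewrite /Xi /mxtrace -(pair_bigA _ (fun i j => A i j * P s j i)).
by apply: eq_bigr => i _; rewrite mxE.
Qed.

Lemma Xi2E (A B : M) s : Xi2 A B s =
  \sum_(x : I4) (A x.1.1 x.1.2 * B x.2.1 x.2.2) * (P s x.1.2 x.1.1 * P s x.2.2 x.2.1).
Proof.
rewrite /Xi2 !XiE mulr_suml -(pair_bigA _ (fun y z => (A y.1 y.2 * B z.1 z.2) * (P s y.2 y.1 * P s z.2 z.1))).
apply: eq_bigr => y _; rewrite mulr_sumr; apply: eq_bigr => z _; ring.
Qed.

Lemma XitE (A B : M) s : Xit A B s =
  \sum_(x : I4) (A x.1.1 x.1.2 * B x.2.1 x.2.2) * (P s x.1.2 x.2.1 * P s x.2.2 x.1.1).
Proof.
rewrite /Xit /mxtrace -(pair_bigA _ (fun y z => (A y.1 y.2 * B z.1 z.2) * (P s y.2 z.1 * P s z.2 y.1))).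
rewrite -(pair_bigA _ (fun a b => \sum_z (A a b * B z.1 z.2) * (P s b z.1 * P s z.2 a))).
apply: eq_bigr => a _; rewrite mxE.
rewrite (eq_bigr (fun e => \sum_c \sum_b A a b * P s b c * B c e * P s e a)); last first.
  by move=> e _; rewrite mxE mulr_suml; apply: eq_bigr => c _; rewrite mxE !mulr_suml.
rewrite exchange_big /=.
rewrite (eq_bigr (fun c => \sum_b \sum_e A a b * P s b c * B c e * P s e a)); last first.
  by move=> c _; rewrite exchange_big.
rewrite exchange_big /=; apply: eq_bigr => b _.
rewrite pair_bigA /=; apply: eq_bigr => z _; ring.
Qed.
End Dp.

Section Ep.
Variable C : numClosedFieldType.
Variable n : nat.
Local Notation d := (2 ^ n)%N.
Local Notation P s := (pauli_mx C s).
Local Notation M := 'M[C]_(2 ^ n).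
Local Notation I := 'I_(2 ^ n).
Local Notation I4 := ((I * I) * (I * I))%type.

Lemma sum_prod_expand (T : finType) (al be : T -> C) (u v : pstring n -> T -> C) :
  \sum_(s : pstring n) (\sum_x al x * u s x) * (\sum_y be y * v s y)
  = \sum_x \sum_y al x * be y * \sum_(s : pstring n) u s x * v s y.
Proof.
rewrite (eq_bigr (fun s => \sum_x \sum_y al x * be y * (u s x * v s y))); last first.
  move=> s _; rewrite mulr_suml; apply: eq_bigr => x _; rewrite mulr_sumr.
  by apply: eq_bigr => y _; ring.
rewrite exchange_big; apply: eq_bigr => x _.
rewrite exchange_big; apply: eq_bigr => y _.
by rewrite mulr_sumr.
Qed.

Lemma norm4 (A B : M) :
  \sum_s Xit A B s * Xit A B s = \sum_s Xi2 A B s * Xi2 A B s.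
Proof.
under eq_bigr => s _ do rewrite XitE.
under [RHS]eq_bigr => s _ do rewrite Xi2E.
rewrite !(sum_prod_expand (fun x : I4 => A x.1.1 x.1.2 * B x.2.1 x.2.2)
                          (fun x : I4 => A x.1.1 x.1.2 * B x.2.1 x.2.2)).
apply: eq_bigr => x _; apply: eq_bigr => y _; congr (_ * _).
exact: pauli_m4.
Qed.

Lemma sum_delta2 (f : I * I -> C) (a b : I) :
  \sum_(y : I * I) f y * ((a == y.1)%:R * (b == y.2)%:R) = f (a, b).
Proof.
rewrite (bigD1 (a, b)) //= !eqxx !mulr1n !mulr1 big1 ?addr0 // => y Hy.
case: (eqVneq a y.1) => [Ha|Ha]; last by rewrite mul0r mulr0.
case: (eqVneq b y.2) => [Hb|Hb]; last by rewrite mulr0 mulr0.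
by move: Hy; rewrite Ha Hb -surjective_pairing eqxx.
Qed.

Lemma norm2 (A B : M) :
  \sum_s Xi A s * Xi B s = d%:R * \tr (A *m B).
Proof.
under eq_bigr => s _ do rewrite !XiE.
rewrite (sum_prod_expand (fun x : I * I => A x.1 x.2) (fun x : I * I => B x.1 x.2)).
under eq_bigr => x _ do under eq_bigr => y _ do rewrite pauli_m2.
rewrite /mxtrace (eq_bigr (fun i => \sum_j A i j * B j i)); last by move=> i _; rewrite mxE.
rewrite [X in _ = _ * X]pair_bigA mulr_sumr /=.
apply: eq_bigr => x _.
rewrite (eq_bigr (fun y => A x.1 x.2 * d%:R * (B y.1 y.2 * ((x.2 == y.1)%:R * (x.1 == y.2)%:R)))).
  by rewrite -mulr_sumr sum_delta2 /=; ring.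
by move=> y _; ring.
Qed.

Lemma pnorm2_real (f : pstring n -> C) : (forall s, (f s)^* = f s) ->
  pnorm2 f = \sum_s f s * f s.
Proof. by move=> H; apply: eq_bigr => s _; rewrite normCK H. Qed.

Lemma pnorm2_Xi (O : M) : pnorm2 (Xi O) = d%:R * hs2 O.
Proof.
rewrite /pnorm2; under eq_bigr => s _ do rewrite normCK Xi_conj.
rewrite norm2 /hs2 /mxtrace; congr (_ * _); apply: eq_bigr => i _.
rewrite mxE; apply: eq_bigr => j _; by rewrite !mxE normCK.
Qed.

Lemma amgm (a b : C) : `|a * b| *+ 2 <= `|a| ^+ 2 + `|b| ^+ 2.
Proof.
rewrite normrM -subr_ge0.
have -> : `|a| ^+ 2 + `|b| ^+ 2 - `|a| * `|b| *+ 2 = (`|a| - `|b|) ^+ 2.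
  by rewrite sqrrB; ring.
by rewrite -realEsqr rpredB // ger0_real.
Qed.

Lemma pdot_le (X Y : pstring n -> C) : pnorm2 X = pnorm2 Y ->
  `|pdot X Y| <= pnorm2 X.
Proof.
move=> H.
suff H2 : `|pdot X Y| *+ 2 <= pnorm2 X *+ 2 by rewrite lerMn2r in H2.
apply: le_trans (_ : (\sum_s `|X s * Y s|) *+ 2 <= _).
  by rewrite lerMn2r /=; apply: ler_norm_sum.
rewrite -sumrMnl mulr2n {2}H /pnorm2 -big_split /=.
by apply: ler_sum => s _; apply: amgm.
Qed.

End Ep.

Section Fp.
Variable C : numClosedFieldType.

Lemma sum_delta1 (T : finType) (i : T) (F : T -> C) :
  \sum_l (l == i)%:R * F l = F i.
Proof.
rewrite (bigD1 i) //= eqxx mul1r big1 ?addr0 // => l /negbTE ->.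
by rewrite mul0r.
Qed.

Lemma psd_tr_ge0 m (rho A : 'M[C]_m) : psd rho -> 0 <= \tr (adjmx A *m rho *m A).
Proof.
case=> _ H; rewrite /mxtrace; apply: sumr_ge0 => j _.
suff -> : (adjmx A *m rho *m A) j j = (map_mx Num.conj ((col j A)^T) *m rho *m col j A) 0 0 by [].
rewrite !mxE; apply: eq_bigr => k _; rewrite !mxE; congr (_ * _).
by apply: eq_bigr => l _; rewrite !mxE.
Qed.

Lemma psd_quad m (rho : 'M[C]_m) i j (a b : C) : psd rho ->
  0 <= a^* * a * rho i i + a^* * b * rho i j + b^* * a * rho j i + b^* * b * rho j j.
Proof.
case=> _ H; have := H (\col_l ((l == i)%:R * a + (l == j)%:R * b)).
suff -> : (map_mx Num.conj ((\col_l ((l == i)%:R * a + (l == j)%:R * b))^T) *m rho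
   *m (\col_l ((l == i)%:R * a + (l == j)%:R * b))) 0 0 =
   a^* * a * rho i i + a^* * b * rho i j + b^* * a * rho j i + b^* * b * rho j j by [].
rewrite !mxE.
rewrite (eq_bigr (fun k => (k == i)%:R * (a * (a^* * rho i k + b^* * rho j k)) +
                           (k == j)%:R * (b * (a^* * rho i k + b^* * rho j k)))).
  by rewrite big_split /= !sum_delta1; ring.
move=> k _; rewrite !mxE.
rewrite (eq_bigr (fun l => (l == i)%:R * (a^* * rho l k) + (l == j)%:R * (b^* * rho l k))).
  by rewrite big_split /= !sum_delta1; ring.
by move=> l _; rewrite !mxE rmorphD !rmorphM /= !rmorph_nat; ring.
Qed.

Lemma psd_minor m (rho : 'M[C]_m) i j : psd rho ->
  `|rho i j| ^+ 2 <= rho i i * rho j j.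
Proof.
move=> Hp; have Hh := Hp.1.
have Hji : rho j i = (rho i j)^*.
  by rewrite -{1}Hh !mxE.
have Hx : 0 <= rho i i.
  by have := psd_quad i j 1 0 Hp; rewrite conjC1 conjC0 !mul1r !mul0r !addr0.
have Hy : 0 <= rho j j.
  by have := psd_quad i j 0 1 Hp; rewrite conjC1 conjC0 !mul1r !mul0r !add0r.
have Rx : (rho i i)^* = rho i i by apply/CrealP/ger0_real.
have Ry : (rho j j)^* = rho j j by apply/CrealP/ger0_real.
rewrite normCK.
set x := rho i i in Hx Rx *; set y := rho j j in Hy Ry *; set z := rho i j in Hji *.
have := Hy; rewrite le0r => /orP[/eqP y0 | ypos].
  rewrite y0 mulr0.
  set mm := z * z^*.
  have Hm : 0 <= mm by apply: mul_conjC_ge0.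
  have Rm : mm^* = mm by rewrite /mm rmorphM /= conjCK mulrC.
  have := psd_quad i j mm (- (x + 1) * z^*) Hp.
  rewrite Rm rmorphM rmorphN rmorphD /= Rx conjC1 conjCK -/x -/y -/z Hji y0.
  have -> : mm * mm * x + mm * (- (x + 1) * z^*) * z + - (x + 1) * z * mm * z^* +
     - (x + 1) * z * (- (x + 1) * z^*) * 0 = - (mm * mm * (x + 2%:R)) by rewrite /mm; ring.
  rewrite oppr_ge0 => Hle; clearbody mm.
  have H0 : mm * mm * (x + 2%:R) = 0.
    apply/eqP; rewrite eq_le Hle /=; apply: mulr_ge0; first exact: mulr_ge0.
    by apply: addr_ge0.
  have Hx2 : x + 2%:R != 0 by apply: lt0r_neq0; apply: ltr_wpDl.
  move/eqP: H0; rewrite mulf_eq0 (negbTE Hx2) orbF mulf_eq0 orbb => /eqP ->.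
  by [].
have := psd_quad i j y (- z^*) Hp.
rewrite Ry rmorphN /= conjCK -/x -/y -/z Hji.
have -> : y * y * x + y * - z^* * z + - z * y * z^* + - z * - z^* * y = y * (x * y - z * z^*) by ring.
by rewrite pmulr_rge0 // subr_ge0 mulrC.
Qed.

Lemma hs2_le1 m (rho : 'M[C]_m) : density_op rho -> hs2 rho <= 1.
Proof.
case=> Hp Htr.
apply: le_trans (_ : \sum_i \sum_j rho i i * rho j j <= _).
  by apply: ler_sum => i _; apply: ler_sum => j _; apply: psd_minor.
have -> : \sum_i \sum_j rho i i * rho j j = \tr rho * \tr rho.
  by rewrite /mxtrace mulr_suml; apply: eq_bigr => i _; rewrite mulr_sumr.
by rewrite Htr mulr1.
Qed.

Variable n : nat.
Local Notation P s := (pauli_mx C s).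

Lemma Xi_rho_aux (rho : 'M[C]_(2 ^ n)) s (c : C) : density_op rho -> c^* = c -> c * c = 1 ->
  0 <= 1 + c * Xi rho s.
Proof.
move=> [Hp Htr] Hc Hcc.
set Mx := 1%:M + c *: P s.
have adjM : adjmx Mx = Mx.
  apply/matrixP => i j; rewrite /Mx -[in RHS](@adj_pauli C n s) !mxE rmorphD rmorphM /= rmorphMn /=.
  by rewrite conjC1 eq_sym Hc.
have MM : Mx *m Mx = 2%:R *: Mx.
  rewrite /Mx mulmxDl !mulmxDr -!scalemxAl -!scalemxAr !mul1mx !mulmx1 scalerA Hcc scale1r pauli_sq.
  by rewrite scaler_nat mulr2n [c *: P s + 1%:M]addrC addrA.
have := psd_tr_ge0 Mx Hp; rewrite adjM mxtrace_mulC mulmxA MM mxtrace_mulC -scalemxAr mxtraceZ.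
rewrite /Mx mulmxDr mulmx1 -scalemxAr mxtraceD mxtraceZ Htr.
by rewrite pmulr_rge0 // ltr0n.
Qed.

Lemma Xi_rho_le1 (rho : 'M[C]_(2 ^ n)) s : density_op rho -> `|Xi rho s| ^+ 2 <= 1.
Proof.
move=> Hd.
have Hr : Xi rho s \is Num.real by apply/CrealP; rewrite Xi_conj Hd.1.1.
have H1 := Xi_rho_aux s Hd (conjC1 C) (mulr1 1).
have H2 := Xi_rho_aux s Hd (conjCN1 C) (etrans (mulrNN (1:C) 1) (mulr1 1)).
rewrite real_normK // -subr_ge0.
have -> : 1 - Xi rho s ^+ 2 = (1 + 1 * Xi rho s) * (1 + -1 * Xi rho s) by ring.
exact: mulr_ge0.
Qed.

End Fp.

Section Gp.
Variable C : numClosedFieldType.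

Lemma exists_max (T : finType) (Pr : pred T) (F : T -> C) :
  (forall t, F t \is Num.real) -> (exists t, Pr t) ->
  exists t, Pr t /\ forall u, Pr u -> F u <= F t.
Proof.
move=> Hr [t0 Ht0].
have gen : forall s : seq T, has Pr s ->
    exists t, [/\ t \in s, Pr t & forall u, u \in s -> Pr u -> F u <= F t].
  elim => [|a s IH] //= Hh.
  case: (boolP (has Pr s)) => Hs.
    have [t [Hts Ht Hmax]] := IH Hs.
    case: (boolP (Pr a && (F t <= F a))) => [/andP[Ha Hle]|Hn].
      exists a; split => //; first by rewrite inE eqxx.
      move=> u; rewrite inE => /orP[/eqP -> _|Hu Pu]; first exact: lexx.
      exact: le_trans (Hmax u Hu Pu) Hle.
    exists t; split => //; first by rewrite inE Hts orbT.
    move=> u; rewrite inE => /orP[/eqP -> Pu|Hu Pu]; last exact: Hmax.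
    move: Hn; rewrite Pu /=.
    by have /orP[H|H] := real_leVge (Hr t) (Hr a); [rewrite H|].
  have Ha : Pr a by move: Hh; rewrite (negbTE Hs) orbF.
  exists a; split => //; first by rewrite inE eqxx.
  move=> u; rewrite inE => /orP[/eqP -> _|Hu Pu]; first exact: lexx.
  by move: Hs => /hasPn /(_ u Hu); rewrite Pu.
have [|t [_ Ht Hmax]] := gen (enum T).
  by apply/hasP; exists t0; rewrite ?mem_enum.
by exists t; split => // u Pu; apply: Hmax; rewrite ?mem_enum.
Qed.

Lemma weighted (T : finType) k (w x : T -> C) :
  (forall t, 0 <= w t) -> (forall t, w t <= 1) -> \sum_t w t <= k%:R ->
  (forall t, 0 <= x t) -> (exists S : {set T}, #|S| == k) ->
  exists2 S : {set T}, #|S| == k & \sum_t w t * x t <= \sum_(t in S) x t.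
Proof.
move=> Hw0 Hw1 Hsw Hx0 Hex.
have [S [HS Hmax]] := @exists_max _ (fun S : {set T} => #|S| == k) (fun S : {set T} => \sum_(t in S) x t)
  (fun S => ger0_real (sumr_ge0 _ (fun t _ => Hx0 t))) Hex.
exists S => //.
have Hexch : forall s t, s \in S -> t \notin S -> x t <= x s.
  move=> s t Hs Ht.
  have Ht' : t \notin S :\ s by rewrite in_setD1 (negbTE Ht) andbF.
  have Hc : #|t |: (S :\ s)| == k.
    by rewrite cardsU1 Ht' -(eqP HS) (cardsD1 s S) Hs.
  have := Hmax _ Hc.
  by rewrite big_setU1 //= (big_setD1 _ Hs) /= lerD2r.
set X := \sum_(t in S) (1 - w t) * x t.
set Y := \sum_(t in ~: S) w t * x t.
set A := \sum_(t in S) (1 - w t).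
set B := \sum_(t in ~: S) w t.
have HX : 0 <= X.
  by apply: sumr_ge0 => t _; apply: mulr_ge0 => //; rewrite subr_ge0.
have Hsplit : forall F : T -> C, \sum_t F t = \sum_(t in S) F t + \sum_(t in ~: S) F t.
  move=> F; rewrite (bigID (fun t => t \in S)) /=.
  by congr (_ + _); apply: eq_bigl => t; rewrite ?inE.
have HBA : B <= A.
  rewrite /A /B sumrB sumr_const (eqP HS) lerBrDl.
  by move: Hsw; rewrite (Hsplit w).
have HAY : A * Y <= B * X.
  rewrite /A /Y /B /X !mulr_suml.
  under [X in X <= _]eq_bigr => s _ do rewrite mulr_sumr.
  under [X in _ <= X]eq_bigr => t _ do rewrite mulr_sumr.
  rewrite [X in _ <= X]exchange_big /=.
  apply: ler_sum => s Hs; apply: ler_sum => t Ht.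
  have Hts : x t <= x s by apply: Hexch; rewrite // -in_setC.
  have -> : (1 - w s) * (w t * x t) = ((1 - w s) * w t) * x t by ring.
  have -> : w t * ((1 - w s) * x s) = ((1 - w s) * w t) * x s by ring.
  by apply: ler_wpM2l => //; apply: mulr_ge0; rewrite ?subr_ge0.
have HYX : Y <= X.
  have HA0 : 0 <= A by apply: sumr_ge0 => t _; rewrite subr_ge0.
  have := HA0; rewrite le0r => /orP[/eqP A0|Apos].
    have HB0 : B = 0.
      apply/eqP; rewrite eq_le; apply/andP; split; first by rewrite -A0.
      by apply: sumr_ge0.
    rewrite /Y big1 // => t Ht.
    by rewrite (psumr_eq0P (fun t _ => Hw0 t) HB0 Ht) mul0r.
  rewrite -(ler_pM2l Apos).
  apply: le_trans HAY _.
  exact: ler_wpM2r.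
rewrite (Hsplit (fun t => w t * x t)).
apply: le_trans (_ : \sum_(t in S) w t * x t + X <= _); first by rewrite lerD2l.
rewrite /X -big_split /= le_eqVlt; apply/orP; left; apply/eqP; apply: eq_bigr => t _; ring.
Qed.

Lemma exists_card (T : finType) k : (k <= #|T|)%N -> exists S : {set T}, #|S| == k.
Proof.
elim: k => [|k IH] Hk; first by exists set0; rewrite cards0.
have [S /eqP HS] := IH (ltnW Hk).
case: (pickP (fun t => t \notin S)) => [t Ht|H].
  by exists (t |: S); rewrite cardsU1 Ht HS.
have : #|S| = #|T|.
  apply: eq_card => t; have := H t; rewrite /= inE.
  by case: (t \in S).
by rewrite HS => Heq; rewrite Heq ltnn in Hk.
Qed.

Lemma bigmax_real (I : Type) (r : seq I) (Pr : pred I) (F : I -> C) :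
  (forall i, F i \is Num.real) -> \big[Num.max/0]_(i <- r | Pr i) F i \is Num.real.
Proof.
move=> Hr; apply: (big_ind (fun v => v \is Num.real)) => //; first exact: max_real.
Qed.

Lemma bigmax_ge (I : eqType) (r : seq I) (Pr : pred I) (F : I -> C) j :
  (forall i, F i \is Num.real) -> j \in r -> Pr j -> F j <= \big[Num.max/0]_(i <- r | Pr i) F i.
Proof.
move=> Hr; elim: r => //= a r IH; rewrite inE big_cons => /orP[/eqP Ej|Hjr] Pj.
  rewrite -Ej Pj comparable_le_max ?lexx //.
  by apply: real_comparable => //; apply: bigmax_real.
case: ifP => Pa; last exact: IH.
rewrite comparable_le_max ?IH ?orbT //.
by apply: real_comparable => //; apply: bigmax_real.
Qed.

Lemma topsum_ge n k (f : pstring n -> C) (S : {set pstring n}) :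
  (forall t, 0 <= f t) -> #|S| == k -> \sum_(s in S) f s <= topsum k f.
Proof.
move=> Hf HS; rewrite /topsum.
apply: (bigmax_ge (F := fun S : {set pstring n} => \sum_(s in S) f s)) => //.
  by move=> i; apply: ger0_real; apply: sumr_ge0.
exact: mem_index_enum.
Qed.

Lemma topsum_le n k (f : pstring n -> C) (B : C) :
  (forall t, 0 <= f t) -> 0 <= B ->
  (forall S : {set pstring n}, #|S| == k -> \sum_(s in S) f s <= B) -> topsum k f <= B.
Proof.
move=> Hf HB HS; rewrite /topsum.
suff /andP[] : (\big[Num.max/0]_(S : {set pstring n} | #|S| == k) \sum_(s in S) f s \is Num.real) &&
  (\big[Num.max/0]_(S : {set pstring n} | #|S| == k) \sum_(s in S) f s <= B) by [].
apply: (big_ind (fun v => (v \is Num.real) && (v <= B))).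
- by rewrite real0 HB.
- move=> a b /andP[Ra Ha] /andP[Rb Hb]; rewrite max_real //=.
  by rewrite comparable_ge_max ?Ha ?Hb //; apply: real_comparable.
- move=> S HSk; rewrite HS // andbT; apply: ger0_real; apply: sumr_ge0.
  by move=> i _; apply: Hf.
Qed.

End Gp.
Unset Implicit Arguments.

Lemma part1 (C : numClosedFieldType) (n : nat) (O1 O2 : 'M[C]_(2 ^ n)) :
  hermitian_op O1 -> hermitian_op O2 ->
     `|pdot (Xit O1 O2) (Xi2 O1 O2)| <= pnorm2 (Xit O1 O2) /\
     pnorm2 (Xit O1 O2) = pnorm2 (Xi2 O1 O2).
Proof.
move=> H1 H2.
have RXit : forall s, (Xit O1 O2 s)^* = Xit O1 O2 s.
  by move=> s; rewrite Xit_conj H1 H2.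
have RXi2 : forall s, (Xi2 O1 O2 s)^* = Xi2 O1 O2 s.
  by move=> s; rewrite /Xi2 rmorphM /= !Xi_conj H1 H2.
have Heq : pnorm2 (Xit O1 O2) = pnorm2 (Xi2 O1 O2).
  by rewrite !pnorm2_real // norm4.
by split => //; apply: pdot_le.
Qed.

Theorem mainTheorem17 (C : numClosedFieldType) (n : nat) (hn : (0 < n)%N) :
  (forall O1 O2 : 'M[C]_(2 ^ n), hermitian_op O1 -> hermitian_op O2 ->
     `|pdot (Xit O1 O2) (Xi2 O1 O2)| <= pnorm2 (Xit O1 O2) /\
     pnorm2 (Xit O1 O2) = pnorm2 (Xi2 O1 O2)) /\
  (forall rho O : 'M[C]_(2 ^ n), density_op rho -> hermitian_op O -> \tr O = 0 ->
     [/\ `|pdot (Xit rho O) (Xi2 rho O)| <= pnorm2 (Xit rho O),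
         pnorm2 (Xit rho O) = pnorm2 (Xi2 rho O),
         pnorm2 (Xi2 rho O) <= topsum (2 ^ n) (fun s => Xi O s ^+ 2),
         topsum (2 ^ n) (fun s => Xi O s ^+ 2) <= pnorm2 (Xi O)
       & pnorm2 (Xi O) = (2 ^ n)%:R * hs2 O]).
Proof.
split; first exact: part1.
move=> rho O Hd HO _.
have [Pa Pb] := @part1 C n rho O Hd.1.1 HO.
have RO : forall s, Xi O s \is Num.real by move=> s; apply/CrealP; rewrite Xi_conj HO.
have Hx0 : forall s, 0 <= Xi O s ^+ 2 by move=> s; rewrite -realEsqr.
have HpO : pnorm2 (Xi O) = \sum_s Xi O s ^+ 2.
  by rewrite /pnorm2; apply: eq_bigr => s _; rewrite real_normK.
split => //.

- have -> : pnorm2 (Xi2 rho O) = \sum_s `|Xi rho s| ^+ 2 * Xi O s ^+ 2.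
    by rewrite /pnorm2; apply: eq_bigr => s _; rewrite /Xi2 normrM exprMn (real_normK (RO s)).
  have Hex : exists S : {set pstring n}, #|S| == (2 ^ n)%N.
    apply: exists_card; rewrite card_ffun !card_ord leq_exp2r //.
  have Hsw : \sum_t `|Xi rho t| ^+ 2 <= (2 ^ n)%:R.
    have -> : \sum_t `|Xi rho t| ^+ 2 = pnorm2 (Xi rho) by [].
    rewrite pnorm2_Xi -[X in _ <= X]mulr1; apply: ler_wpM2l; first exact: ler0n.
    exact: hs2_le1.
  have [S HS Hle] := weighted (w := fun s => `|Xi rho s| ^+ 2) (x := fun s => Xi O s ^+ 2)
    (fun s => exprn_ge0 2 (normr_ge0 _)) (fun s => Xi_rho_le1 s Hd) Hsw Hx0 Hex.
  apply: le_trans Hle _; exact: topsum_ge.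
- apply: topsum_le => //; first by rewrite HpO; apply: sumr_ge0.
  move=> S _; rewrite HpO big_mkcond /=; apply: ler_sum => s _.
  by case: ifP.
- exact: pnorm2_Xi.
Qed.
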